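(* Consider a liquid ($l$), its vapor ($v$) and a gas ($g$), each with extensive entropy $S_k:(\mathbb R^+)^3\to\mathbb R\cup\{-\infty\}$ of $(M_k,V_k,E_k)$ which is concave, positively homogeneous of degree 1, upper semi-continuous, has non-empty closed convex domain $C_k=\{S_k>-\infty\}$, and is $\mathcal C^2$ on $C_k$ with $\partial S_k/\partial E>0$. Let $s_k(\tau,e)=S_k(1,\tau,e)$ and, for $\tau,e>0$, mass fractions $\varphi_k$, volume fractions $\alpha_k$ and energy fractions $z_k$ in $[0,1]$, set $$\sigma(\tau,e,(\varphi_k),(\alpha_k),(z_k))=\sum_{k\in\{l,g,v\}}\varphi_k\, s_k\Big(\frac{\alpha_k}{\varphi_k}\tau,\frac{z_k}{\varphi_k}e\Big),$$ with the convention $\varphi_k s_k(a/\varphi_k,b/\varphi_k)=S_k(\varphi_k,a,b)$. Fix $\varphi_g\in[0,1]$. Without phase transition, with $\varphi_l$ also fixed and $\varphi_v=1-\varphi_l-\varphi_g\ge 0$, define $$s_{NPT}(\tau,e,\varphi_l,\varphi_g)=\max\{\sigma:\ \alpha_l+\alpha_v=1,\ \alpha_g=\alpha_v,\ z_l+z_g+z_v=1\},$$ the maximum being over $(\alpha_k,z_k)_k$. With phase transition, define $$s_{PT}(\tau,e,\varphi_g)=\max\{\sigma:\ \varphi_l+\varphi_v=1-\varphi_g,\ \alpha_l+\alpha_v=1,\ \alpha_g=\alpha_v,\ z_l+z_g+z_v=1\},$$ the maximum being over $(\varphi_l,\varphi_v,(\alpha_k),(z_k))$. Let $S_{NPT}(M,V,E,M_l,M_g)$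 be the maximum of $\sum_k S_k(M_k,V_k,E_k)$ over $W_k\in C_k$ with $M_v=M-M_l-M_g$, $E=E_l+E_g+E_v$, $V=V_l+V_v$, $V_g=V_v$, and $S_{PT}(M,V,E,M_g)$ the analogous maximum where additionally $M_l,M_v\ge0$ vary subject to $M_l+M_v=M-M_g$. Then these intensive functions are the equilibrium intensive entropies of the mixture, i.e. for $M>0$, $S_{NPT}(M,V,E,M_l,M_g)=M\,s_{NPT}(V/M,E/M,M_l/M,M_g/M)$ and $S_{PT}(M,V,E,M_g)=M\,s_{PT}(V/M,E/M,M_g/M)$; and in both cases the equilibrium intensive entropy is a concave function of its arguments.
   Context: $\varphi_k=M_k/M$, $\alpha_k=V_k/V$, $z_k=E_k/E$, $\tau=V/M$ (specific volume), $e=E/M$ (specific internal energy). The constraints $\alpha_l+\alpha_v=1$, $\alpha_g=\alpha_v$ express that vapor and gas are miscible while the liquid is immiscible with them. *)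

(* Defs.v *)
From HB Require Import structures.
From mathcomp Require Import all_boot all_order all_algebra.
From mathcomp Require Import all_classical all_reals all_analysis.
Set Implicit Arguments. Unset Strict Implicit. Unset Printing Implicit Defensive.
Import Order.TTheory GRing.Theory Num.Theory.
Import numFieldNormedType.Exports.
Local Open Scope classical_set_scope.
Local Open Scope ring_scope.

Section Defs.
Variable R : realType.

Definition state := (R * R * R)%type.

Definition st_M (W : state) : R := W.1.1.
Definition st_V (W : state) : R := W.1.2.
Definition st_E (W : state) : R := W.2.

Definition nonneg_state (W : state) : Prop :=
  0 <= st_M W /\ 0 <= st_V W /\ 0 <= st_E W.

Definition dom_S (S : state -> \bar R) : set state :=
  [set W | nonneg_state W /\ S W != -oo%E].

Definition comb (t : R) (W1 W2 : state) : state :=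
  ((t * st_M W1 + (1 - t) * st_M W2, t * st_V W1 + (1 - t) * st_V W2),
    t * st_E W1 + (1 - t) * st_E W2).

Definition concave_S (S : state -> \bar R) : Prop :=
  forall W1 W2 t, nonneg_state W1 -> nonneg_state W2 -> 0 < t < 1 ->
    (t%:E * S W1 + (1 - t)%:E * S W2 <= S (comb t W1 W2))%E.

Definition pos_homogeneous1 (S : state -> \bar R) : Prop :=
  forall (l : R) W, 0 < l -> nonneg_state W ->
    S ((l * st_M W, l * st_V W), l * st_E W) = (l%:E * S W)%E.

Definition usc_S (S : state -> \bar R) : Prop :=
  forall W (r : R), nonneg_state W -> (S W < r%:E)%E ->
    exists2 d : R, 0 < d & forall W', nonneg_state W' ->
      `|st_M W' - st_M W| < d -> `|st_V W' - st_V W| < d ->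
      `|st_E W' - st_E W| < d -> (S W' < r%:E)%E.

Definition convex_set3 (A : set state) : Prop :=
  forall W1 W2 t, A W1 -> A W2 -> 0 <= t <= 1 -> A (comb t W1 W2).

Definition basis3 (i : 'I_3) : state :=
  ((if val i == 0%N then 1 else 0, if val i == 1%N then 1 else 0),
    if val i == 2%N then 1 else 0).

Definition C2_on (A : set state) (f : state -> R) : Prop :=
  forall i j : 'I_3,
    (forall W, A W -> derivable f W (basis3 i)) /\
    {within A, continuous (fun W => 'D_(basis3 i) f W)} /\
    (forall W, A W -> derivable (fun W' => 'D_(basis3 i) f W') W (basis3 j)) /\
    {within A, continuous (fun W => 'D_(basis3 j) (fun W' => 'D_(basis3 i) f W') W)}.

Definition entropy_hyp (S : state -> \bar R) : Prop :=
  [/\ concave_S S,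
      pos_homogeneous1 S,
      usc_S S,
      (dom_S S !=set0 /\ closed (dom_S S) /\ convex_set3 (dom_S S)) &
      (C2_on (interior (dom_S S)) (fun W => fine (S W)) /\
      (forall W, interior (dom_S S) W ->
         0 < 'D_(basis3 (@Ordinal 3 2 isT)) (fun W' => fine (S W')) W))].

Definition s_int (S : state -> \bar R) (tau e : R) : \bar R := S ((1, tau), e).

(* phi_k s_k(alpha_k tau/phi_k, z_k e/phi_k), with the convention
   phi s(a/phi, b/phi) = S(phi, a, b) (used at phi = 0) *)
Definition term (S : state -> \bar R) (tau e phi a z : R) : \bar R :=
  if phi == 0 then S ((phi, a * tau), z * e)
  else (phi%:E * s_int S (a / phi * tau) (z / phi * e))%E.

Definition sigma (Sl Sg Sv : state -> \bar R) (tau e : R)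
  (phil phig phiv al ag av zl zg zv : R) : \bar R :=
  (term Sl tau e phil al zl + term Sg tau e phig ag zg + term Sv tau e phiv av zv)%E.

Definition unit01 (x : R) : Prop := 0 <= x <= 1.

Definition s_NPT (Sl Sg Sv : state -> \bar R) (tau e phil phig : R) : \bar R :=
  ereal_sup [set x | exists al ag av zl zg zv : R,
    [/\ unit01 al, unit01 ag & unit01 av] /\ [/\ unit01 zl, unit01 zg & unit01 zv] /\
    [/\ al + av = 1, ag = av & zl + zg + zv = 1] /\
    x = sigma Sl Sg Sv tau e phil phig (1 - phil - phig) al ag av zl zg zv].

Definition s_PT (Sl Sg Sv : state -> \bar R) (tau e phig : R) : \bar R :=
  ereal_sup [set x | exists phil phiv al ag av zl zg zv : R,
    [/\ unit01 phil, unit01 phiv & phil + phiv = 1 - phig] /\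
    [/\ unit01 al, unit01 ag & unit01 av] /\ [/\ unit01 zl, unit01 zg & unit01 zv] /\
    [/\ al + av = 1, ag = av & zl + zg + zv = 1] /\
    x = sigma Sl Sg Sv tau e phil phig phiv al ag av zl zg zv].

Definition S_NPT (Sl Sg Sv : state -> \bar R) (M V E Ml Mg : R) : \bar R :=
  ereal_sup [set x | exists Vl Vg Vv El Eg Ev : R,
    ([/\ dom_S Sl ((Ml, Vl), El), dom_S Sg ((Mg, Vg), Eg) &
        dom_S Sv ((M - Ml - Mg, Vv), Ev)] /\
        [/\ E = El + Eg + Ev, V = Vl + Vv & Vg = Vv]) /\
    x = (Sl ((Ml, Vl), El) + Sg ((Mg, Vg), Eg) + Sv (((M - Ml - Mg)%R, Vv), Ev))%E].

Definition S_PT (Sl Sg Sv : state -> \bar R) (M V E Mg : R) : \bar R :=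
  ereal_sup [set x | exists Ml Mv Vl Vg Vv El Eg Ev : R,
    [/\ 0 <= Ml, 0 <= Mv & Ml + Mv = M - Mg] /\
    ([/\ dom_S Sl ((Ml, Vl), El), dom_S Sg ((Mg, Vg), Eg) &
        dom_S Sv ((Mv, Vv), Ev)] /\
        [/\ E = El + Eg + Ev, V = Vl + Vv & Vg = Vv]) /\
    x = (Sl ((Ml, Vl), El) + Sg ((Mg, Vg), Eg) + Sv ((Mv, Vv), Ev))%E].

Definition dom_NPT (tau e phil phig : R) : Prop :=
  [/\ 0 < tau, 0 < e, 0 <= phil, 0 <= phig & phil + phig <= 1].

Definition dom_PT (tau e phig : R) : Prop :=
  [/\ 0 < tau, 0 < e & 0 <= phig <= 1].

Definition cmb (t x y : R) : R := t * x + (1 - t) * y.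

Definition concave_NPT (f : R -> R -> R -> R -> \bar R) : Prop :=
  forall t a1 b1 c1 d1 a2 b2 c2 d2, 0 < t < 1 ->
    dom_NPT a1 b1 c1 d1 -> dom_NPT a2 b2 c2 d2 ->
    (t%:E * f a1 b1 c1 d1 + (1 - t)%:E * f a2 b2 c2 d2
       <= f (cmb t a1 a2) (cmb t b1 b2) (cmb t c1 c2) (cmb t d1 d2))%E.

Definition concave_PT (f : R -> R -> R -> \bar R) : Prop :=
  forall t a1 b1 d1 a2 b2 d2, 0 < t < 1 ->
    dom_PT a1 b1 d1 -> dom_PT a2 b2 d2 ->
    (t%:E * f a1 b1 d1 + (1 - t)%:E * f a2 b2 d2
       <= f (cmb t a1 a2) (cmb t b1 b2) (cmb t d1 d2))%E.

End Defs.

(* Main.v *)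
Require Import Defs.
From HB Require Import structures.
From mathcomp Require Import all_boot all_order all_algebra.
From mathcomp Require Import all_classical all_reals all_analysis.
From mathcomp Require Import ring lra.
Import Order.TTheory GRing.Theory Num.Theory.
Local Open Scope ring_scope.

Section H.
Variable R : realType.
Local Open Scope ereal_scope.

Lemma pmulED (r : R) (x y : \bar R) : (0 < r)%R ->
  r%:E * (x + y) = r%:E * x + r%:E * y.
Proof.
move=> r0.
have hy : r%:E * +oo = +oo by rewrite muleC gt0_mulye ?lte_fin.
have hny : r%:E * -oo = -oo by rewrite muleC gt0_mulNye ?lte_fin.
case: x => [x||]; case: y => [y||].
- by rewrite -EFinD -!EFinM mulrDr EFinD.
- by rewrite addey // hy addey.
- by rewrite addeNy hny addeNy.
- by rewrite addye // hy addye.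
- by rewrite addye // hy addye.
- by rewrite addeNy hny addeNy.
- by rewrite addNye hny addNye.
- by rewrite addNye hny addNye.
- by rewrite addNye hny addNye.
Qed.

Lemma sup_addc (B : set \bar R) (c U : \bar R) :
  (forall y, B y -> y + c <= U) -> ereal_sup B + c <= U.
Proof.
case: c => [r||] HB; last by rewrite addeNy leNye.
- rewrite -leeBrDr //; apply/ereal_supP => y By.
  by rewrite leeBrDr //; apply: HB.
- have [->|] := eqVneq (ereal_sup B) -oo; first by rewrite addNye leNye.
  rewrite -ltNye => /ereal_sup_gt [y By yN].
  have := HB y By; case: y yN {By} => [y||] yN h.
  + by move: h; rewrite addey // leye_eq => /eqP ->; rewrite leey.
  + by move: h; rewrite addey // leye_eq => /eqP ->; rewrite leey.
  + by rewrite ltxx in yN.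
Qed.

Lemma key_sup (A : set \bar R) (t : R) (c U : \bar R) : (0 < t)%R ->
  (forall x, A x -> t%:E * x + c <= U) -> t%:E * ereal_sup A + c <= U.
Proof.
move=> t0 HA; rewrite -ereal_sup_pZl //; apply: sup_addc.
by move=> _ [x Ax <-]; apply: HA.
Qed.

Lemma term_eq (S : state R -> \bar R) (tau e phi a z : R) :
  pos_homogeneous1 S -> (0 <= phi)%R -> (0 <= a * tau)%R -> (0 <= z * e)%R ->
  term S tau e phi a z = S ((phi, a * tau), z * e)%R.
Proof.
move=> hh p0 at0 ze0; rewrite /term; case: eqP => // /eqP pn0.
have pp : (0 < phi)%R by rewrite lt_neqAle eq_sym pn0.
rewrite /s_int -hh //=; last first.
  by split => //=; split; rewrite /st_V /st_E /= -mulrAC divr_ge0 // ltW.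
congr (S ((_, _), _)); rewrite /st_M /st_V /st_E /=; by field.
Qed.

Lemma term_scale (S : state R -> \bar R) (M tau e phi a z : R) :
  pos_homogeneous1 S -> (0 < M)%R -> (0 <= phi)%R -> (0 <= a * tau)%R -> (0 <= z * e)%R ->
  M%:E * term S tau e phi a z = S ((M * phi, M * (a * tau)), M * (z * e))%R.
Proof.
move=> hh M0 p0 at0 ze0; rewrite term_eq // -hh //.
Qed.

Lemma term_concave (S : state R -> \bar R) (t tau1 e1 p1 a1 z1 tau2 e2 p2 a2 z2
   tau e p a z : R) :
  concave_S S -> pos_homogeneous1 S -> (0 < t < 1)%R ->
  (0 <= p1)%R -> (0 <= a1 * tau1)%R -> (0 <= z1 * e1)%R ->
  (0 <= p2)%R -> (0 <= a2 * tau2)%R -> (0 <= z2 * e2)%R ->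
  p = cmb t p1 p2 -> (a * tau = t * (a1 * tau1) + (1 - t) * (a2 * tau2))%R ->
  (z * e = t * (z1 * e1) + (1 - t) * (z2 * e2))%R ->
  t%:E * term S tau1 e1 p1 a1 z1 + (1 - t)%:E * term S tau2 e2 p2 a2 z2
   <= term S tau e p a z.
Proof.
move=> hc hh /andP[t0 t1] p10 a10 z10 p20 a20 z20 hp ha hz.
have t1' : (0 < 1 - t)%R by lra.
rewrite !term_eq //; last 3 first.
- by rewrite hp /cmb; apply: addr_ge0; apply: mulr_ge0 => //; lra.
- by rewrite ha; apply: addr_ge0; apply: mulr_ge0 => //; lra.
- by rewrite hz; apply: addr_ge0; apply: mulr_ge0 => //; lra.
rewrite hp /cmb ha hz.
apply: (hc ((p1, a1 * tau1), z1 * e1)%R ((p2, a2 * tau2), z2 * e2)%R t).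
- by split => //; split.
- by split => //; split.
- by rewrite t0 t1.
Qed.

Lemma sum3_comb (t : R) (x1 y1 z1 x2 y2 z2 x y z : \bar R) : (0 < t < 1)%R ->
  t%:E * x1 + (1 - t)%:E * x2 <= x ->
  t%:E * y1 + (1 - t)%:E * y2 <= y ->
  t%:E * z1 + (1 - t)%:E * z2 <= z ->
  t%:E * (x1 + y1 + z1) + (1 - t)%:E * (x2 + y2 + z2) <= x + y + z.
Proof.
move=> /andP[t0 t1] hx hy hz.
have t1' : (0 < 1 - t)%R by lra.
rewrite !pmulED // addeACA (addeACA (t%:E * x1)).
by apply: leeD => //; apply: leeD.
Qed.


Lemma frac01 (x s : R) : (0 <= x)%R -> (x <= s)%R -> (0 < s)%R -> unit01 (x / s)%R.
Proof.
move=> x0 xs s0; apply/andP; split; first by apply: divr_ge0 => //; apply: ltW.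
by rewrite ler_pdivrMr // mul1r.
Qed.

Lemma frac2 (x y s : R) : (0 <= x)%R -> (0 <= y)%R -> (x + y = s)%R -> (0 < s)%R ->
  unit01 (x / s)%R /\ unit01 (y / s)%R.
Proof. by move=> *; split; apply: frac01 => //; lra. Qed.

Lemma frac3 (x y z s : R) : (0 <= x)%R -> (0 <= y)%R -> (0 <= z)%R -> (x + y + z = s)%R -> (0 < s)%R ->
  [/\ unit01 (x / s)%R, unit01 (y / s)%R & unit01 (z / s)%R].
Proof. by move=> *; split; apply: frac01 => //; lra. Qed.

Lemma cmb01 (t x y : R) : (0 < t < 1)%R -> unit01 x -> unit01 y -> unit01 (cmb t x y).
Proof.
move=> /andP[t0 t1] /andP[x0 x1] /andP[y0 y1]; rewrite /unit01 /cmb.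
apply/andP; split; nra.
Qed.

End H.

Ltac tc := match goal with
  | |- is_true (0 <= _)%R => by apply: mulr_ge0 => //; apply: ltW
  | |- _ = _ => first [by rewrite divfK | by rewrite /cmb; ring]
  end.

Ltac pos := repeat (first [ done | apply: divr_ge0 | apply: mulr_ge0 | apply: addr_ge0 | rewrite invr_ge0 | apply: ltW ]).

Theorem proposition2p3 (R : realType) (Sl Sg Sv : state R -> \bar R) :
  entropy_hyp Sl -> entropy_hyp Sg -> entropy_hyp Sv ->
  [/\ (forall M V E Ml Mg : R, 0 < M -> 0 < V -> 0 < E ->
         0 <= Ml -> 0 <= Mg -> Ml + Mg <= M ->
         S_NPT Sl Sg Sv M V E Ml Mg
           = (M%:E * s_NPT Sl Sg Sv (V / M) (E / M) (Ml / M) (Mg / M))%E),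
      (forall M V E Mg : R, 0 < M -> 0 < V -> 0 < E -> 0 <= Mg <= M ->
         S_PT Sl Sg Sv M V E Mg
           = (M%:E * s_PT Sl Sg Sv (V / M) (E / M) (Mg / M))%E),
      concave_NPT (s_NPT Sl Sg Sv) &
      concave_PT (s_PT Sl Sg Sv)].
Proof.
move=> [hcl hhl _ _ _] [hcg hhg _ _ _] [hcv hhv _ _ _].
split.
- move=> M V E Ml Mg M0 V0 E0 Ml0 Mg0 hMM.
  have Mn0 : M != 0 := lt0r_neq0 M0.
  have Vn0 : V != 0 := lt0r_neq0 V0.
  have En0 : E != 0 := lt0r_neq0 E0.
  have hphv : 0 <= 1 - Ml / M - Mg / M.
    have : Ml / M + Mg / M <= 1 by rewrite -mulrDl ler_pdivrMr // mul1r.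
    lra.
  apply/le_anti/andP; split.
  + apply/ereal_supP => _ [Vl [Vg [Vv [El [Eg [Ev [[[dl dg dv] [hE hV hVg]] ->]]]]]]].
    rewrite -ereal_sup_pZl //.
    move: dl dg dv => [[_ [/= Vl0 El0]] _] [[_ [/= Vg0 Eg0]] _] [[_ [/= Vv0 Ev0]] _].
    rewrite /st_V /st_E /= in Vl0 El0 Vg0 Eg0 Vv0 Ev0.
    apply: ereal_sup_ubound.
    exists (sigma Sl Sg Sv (V/M) (E/M) (Ml/M) (Mg/M) (1 - Ml/M - Mg/M)
              (Vl/V) (Vv/V) (Vv/V) (El/E) (Eg/E) (Ev/E)).
    * exists (Vl/V), (Vv/V), (Vv/V), (El/E), (Eg/E), (Ev/E).
      split; [|split; [|split; [|by []]]].
      -- split; apply: frac01 => //; lra.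
      -- split; apply: frac01 => //; lra.
      -- split => //.
         ++ by rewrite -mulrDl -hV divff.
         ++ by rewrite -!mulrDl -hE divff.
    * Show.
 rewrite /sigma (@pmulED _ M _ _ M0) (@pmulED _ M _ _ M0).
      rewrite (@term_scale _ _ _ _ _ _ _ _ hhl M0); [|by pos|by pos|by pos].
      rewrite (@term_scale _ _ _ _ _ _ _ _ hhg M0); [|by pos|by pos|by pos].
      rewrite (@term_scale _ _ _ _ _ _ _ _ hhv M0); [|by pos|by pos|by pos].
      rewrite hVg; congr (Sl ((_, _), _) + Sg ((_, _), _) + Sv ((_, _), _))%E.
      all: try by field; rewrite ?Mn0 ?Vn0 ?En0.
  + rewrite -ereal_sup_pZl //; apply/ereal_supP => _ [_ [al [ag [av [zl [zg [zv [[ual uag uav] [[uzl uzg uzv] [[hal hag hz] ->]]]]]]]]] <-].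
    subst ag.
    move: ual uav uzl uzg uzv => /andP[al0 al1] /andP[av0 av1] /andP[zl0 zl1] /andP[zg0 zg1] /andP[zv0 zv1].
    rewrite /sigma (@pmulED _ M _ _ M0) (@pmulED _ M _ _ M0).
    rewrite (@term_scale _ _ _ _ _ _ _ _ hhl M0); [|by pos|by pos|by pos].
    rewrite (@term_scale _ _ _ _ _ _ _ _ hhg M0); [|by pos|by pos|by pos].
    rewrite (@term_scale _ _ _ _ _ _ _ _ hhv M0); [|by pos|by pos|by pos].
    rewrite (_ : M * (Ml / M) = Ml); last by field.
    rewrite (_ : M * (Mg / M) = Mg); last by field.
    rewrite (_ : M * (1 - Ml / M - Mg / M) = M - Ml - Mg); last by field.
    have hMv : 0 <= M - Ml - Mg by lra.
    set A := Sl _; set B := Sg _; set C := Sv _.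
    have [->|An] := eqVneq A -oo%E; first by rewrite !addNye leNye.
    have [->|Bn] := eqVneq B -oo%E; first by rewrite addeNy addNye leNye.
    have [->|Cn] := eqVneq C -oo%E; first by rewrite addeNy leNye.
    apply: ereal_sup_ubound.
    exists (M * (al * (V / M))), (M * (av * (V / M))), (M * (av * (V / M))),
      (M * (zl * (E / M))), (M * (zg * (E / M))), (M * (zv * (E / M))).
    split; last by [].
    split.
    * rewrite /dom_S /nonneg_state /st_M /st_V /st_E /=.
      split; (split; [split; [|split] | done]); pos.
    * split.
      -- have -> : zv = 1 - zl - zg by lra.
         by field.
      -- have -> : av = 1 - al by lra.
         by field.
      -- by [].
- move=> M V E Mg M0 V0 E0 /andP[Mg0 MgM].
  have Mn0 : M != 0 := lt0r_neq0 M0.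
  have Vn0 : V != 0 := lt0r_neq0 V0.
  have En0 : E != 0 := lt0r_neq0 E0.
  apply/le_anti/andP; split.
  + apply/ereal_supP => _ [Ml [Mv [Vl [Vg [Vv [El [Eg [Ev [[Ml0 Mv0 hM] [[[dl dg dv] [hE hV hVg]] ->]]]]]]]]]].
    rewrite -ereal_sup_pZl //.
    move: dl dg dv => [[_ [/= Vl0 El0]] _] [[_ [/= Vg0 Eg0]] _] [[_ [/= Vv0 Ev0]] _].
    rewrite /st_V /st_E /= in Vl0 El0 Vg0 Eg0 Vv0 Ev0.
    apply: ereal_sup_ubound.
    exists (sigma Sl Sg Sv (V/M) (E/M) (Ml/M) (Mg/M) (Mv/M)
              (Vl/V) (Vv/V) (Vv/V) (El/E) (Eg/E) (Ev/E)).
    * exists (Ml/M), (Mv/M), (Vl/V), (Vv/V), (Vv/V), (El/E), (Eg/E), (Ev/E).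
      split; [|split; [|split; [|split; [|by []]]]].
      -- split; [apply: frac01 => //; lra | apply: frac01 => //; lra | ].
         by rewrite -mulrDl hM; field.
      -- split; apply: frac01 => //; lra.
      -- split; apply: frac01 => //; lra.
      -- split => //.
         ++ by rewrite -mulrDl -hV divff.
         ++ by rewrite -!mulrDl -hE divff.
    * rewrite /sigma (@pmulED _ M _ _ M0) (@pmulED _ M _ _ M0).
      rewrite (@term_scale _ _ _ _ _ _ _ _ hhl M0); [|by pos|by pos|by pos].
      rewrite (@term_scale _ _ _ _ _ _ _ _ hhg M0); [|by pos|by pos|by pos].
      rewrite (@term_scale _ _ _ _ _ _ _ _ hhv M0); [|by pos|by pos|by pos].
      rewrite hVg; congr (Sl ((_, _), _) + Sg ((_, _), _) + Sv ((_, _), _))%E.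
      all: try by field; rewrite ?Mn0 ?Vn0 ?En0.
  + rewrite -ereal_sup_pZl //; apply/ereal_supP => _ [_ [phil [phiv [al [ag [av [zl [zg [zv [[uphl uphv hph] [[ual uag uav] [[uzl uzg uzv] [[hal hag hz] ->]]]]]]]]]]]] <-].
    subst ag.
    move: uphl uphv ual uav uzl uzg uzv => /andP[pl0 pl1] /andP[pv0 pv1] /andP[al0 al1] /andP[av0 av1] /andP[zl0 zl1] /andP[zg0 zg1] /andP[zv0 zv1].
    have hMg : 0 <= Mg / M by pos.
    rewrite /sigma (@pmulED _ M _ _ M0) (@pmulED _ M _ _ M0).
    rewrite (@term_scale _ _ _ _ _ _ _ _ hhl M0); [|by pos|by pos|by pos].
    rewrite (@term_scale _ _ _ _ _ _ _ _ hhg M0); [|by pos|by pos|by pos].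
    rewrite (@term_scale _ _ _ _ _ _ _ _ hhv M0); [|by pos|by pos|by pos].
    rewrite (_ : M * (Mg / M) = Mg); last by field.
    set A := Sl _; set B := Sg _; set C := Sv _.
    have [->|An] := eqVneq A -oo%E; first by rewrite !addNye leNye.
    have [->|Bn] := eqVneq B -oo%E; first by rewrite addeNy addNye leNye.
    have [->|Cn] := eqVneq C -oo%E; first by rewrite addeNy leNye.
    apply: ereal_sup_ubound.
    exists (M * phil), (M * phiv), (M * (al * (V / M))), (M * (av * (V / M))), (M * (av * (V / M))),
      (M * (zl * (E / M))), (M * (zg * (E / M))), (M * (zv * (E / M))).
    split.
      split; [by pos | by pos | ].
      by rewrite -mulrDr hph; field.
    split; last by [].
    split.
    * rewrite /dom_S /nonneg_state /st_M /st_V /st_E /=.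
      split; (split; [split; [|split] | done]); pos.
    * split.
      -- have -> : zv = 1 - zl - zg by lra.
         by field.
      -- have -> : av = 1 - al by lra.
         by field.
      -- by [].
- move=> t a1 b1 c1 d1 a2 b2 c2 d2 ht [a10 b10 c10 d10 cd1] [a20 b20 c20 d20 cd2].
  have /andP[t0 t1] := ht.
  have t1' : 0 < 1 - t by lra.
  have t1'' : 0 <= 1 - t by lra.
  have tau0 : 0 < cmb t a1 a2 by rewrite /cmb; apply: addr_gt0; apply: mulr_gt0.
  have e0 : 0 < cmb t b1 b2 by rewrite /cmb; apply: addr_gt0; apply: mulr_gt0.
  have taun0 := lt0r_neq0 tau0.
  have en0 := lt0r_neq0 e0.
  apply: key_sup => // _ [al1 [ag1 [av1 [zl1 [zg1 [zv1 [[ual1 uag1 uav1] [[uzl1 uzg1 uzv1] [[hal1 hag1 hz1] ->]]]]]]]]].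
  rewrite addeC; apply: key_sup => // _ [al2 [ag2 [av2 [zl2 [zg2 [zv2 [[ual2 uag2 uav2] [[uzl2 uzg2 uzv2] [[hal2 hag2 hz2] ->]]]]]]]]].
  rewrite addeC.
  subst ag1 ag2.
  move: ual1 uav1 uzl1 uzg1 uzv1 => /andP[al10 al11] /andP[av10 av11] /andP[zl10 zl11] /andP[zg10 zg11] /andP[zv10 zv11].
  move: ual2 uav2 uzl2 uzg2 uzv2 => /andP[al20 al21] /andP[av20 av21] /andP[zl20 zl21] /andP[zg20 zg21] /andP[zv20 zv21].
  pose Xl := t * (al1 * a1) + (1 - t) * (al2 * a2).
  pose Xv := t * (av1 * a1) + (1 - t) * (av2 * a2).
  pose Yl := t * (zl1 * b1) + (1 - t) * (zl2 * b2).
  pose Yg := t * (zg1 * b1) + (1 - t) * (zg2 * b2).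
  pose Yv := t * (zv1 * b1) + (1 - t) * (zv2 * b2).
  have Xl0 : 0 <= Xl by rewrite /Xl; pos.
  have Xv0 : 0 <= Xv by rewrite /Xv; pos.
  have Yl0 : 0 <= Yl by rewrite /Yl; pos.
  have Yg0 : 0 <= Yg by rewrite /Yg; pos.
  have Yv0 : 0 <= Yv by rewrite /Yv; pos.
  have hX : Xl + Xv = cmb t a1 a2.
    rewrite /Xl /Xv /cmb.
    have -> : av1 = 1 - al1 by lra.
    have -> : av2 = 1 - al2 by lra.
    ring.
  have hY : Yl + Yg + Yv = cmb t b1 b2.
    rewrite /Yl /Yg /Yv /cmb.
    have -> : zv1 = 1 - zl1 - zg1 by lra.
    have -> : zv2 = 1 - zl2 - zg2 by lra.
    ring.
  have p10 : 0 <= 1 - c1 - d1 by lra.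
  have p20 : 0 <= 1 - c2 - d2 by lra.
  apply: le_ereal_sup_tmp.
  exists (sigma Sl Sg Sv (cmb t a1 a2) (cmb t b1 b2) (cmb t c1 c2) (cmb t d1 d2)
     (1 - cmb t c1 c2 - cmb t d1 d2) (Xl / cmb t a1 a2) (Xv / cmb t a1 a2) (Xv / cmb t a1 a2)
     (Yl / cmb t b1 b2) (Yg / cmb t b1 b2) (Yv / cmb t b1 b2)).
  + exists (Xl / cmb t a1 a2), (Xv / cmb t a1 a2), (Xv / cmb t a1 a2),
      (Yl / cmb t b1 b2), (Yg / cmb t b1 b2), (Yv / cmb t b1 b2).
    split; [|split; [|split; [|by []]]].
    * have [h1 h2] := @frac2 _ _ _ _ Xl0 Xv0 hX tau0; by split.
    * have [h1 h2 h3] := @frac3 _ _ _ _ _ Yl0 Yg0 Yv0 hY e0; by split.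
    * split => //.
      -- by rewrite -mulrDl hX divff.
      -- by rewrite -!mulrDl hY divff.
  + rewrite /sigma; apply: sum3_comb => //.
    * by apply: term_concave => //; tc.
    * by apply: term_concave => //; tc.
    * by apply: term_concave => //; tc.
- move=> t a1 b1 d1 a2 b2 d2 ht [a10 b10 /andP[d10 d11]] [a20 b20 /andP[d20 d21]].
  have /andP[t0 t1] := ht.
  have t1' : 0 < 1 - t by lra.
  have t1'' : 0 <= 1 - t by lra.
  have tau0 : 0 < cmb t a1 a2 by rewrite /cmb; apply: addr_gt0; apply: mulr_gt0.
  have e0 : 0 < cmb t b1 b2 by rewrite /cmb; apply: addr_gt0; apply: mulr_gt0.
  have taun0 := lt0r_neq0 tau0.
  have en0 := lt0r_neq0 e0.
  apply: key_sup => // _ [pl1 [pv1 [al1 [ag1 [av1 [zl1 [zg1 [zv1 [[upl1 upv1 hp1] [[ual1 uag1 uav1] [[uzl1 uzg1 uzv1] [[hal1 hag1 hz1] ->]]]]]]]]]]]].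
  rewrite addeC; apply: key_sup => // _ [pl2 [pv2 [al2 [ag2 [av2 [zl2 [zg2 [zv2 [[upl2 upv2 hp2] [[ual2 uag2 uav2] [[uzl2 uzg2 uzv2] [[hal2 hag2 hz2] ->]]]]]]]]]]]].
  rewrite addeC.
  subst ag1 ag2.
  have upl := @cmb01 _ _ _ _ ht upl1 upl2.
  have upv := @cmb01 _ _ _ _ ht upv1 upv2.
  move: upl1 upv1 upl2 upv2 => /andP[pl10 pl11] /andP[pv10 pv11] /andP[pl20 pl21] /andP[pv20 pv21].
  move: ual1 uav1 uzl1 uzg1 uzv1 => /andP[al10 al11] /andP[av10 av11] /andP[zl10 zl11] /andP[zg10 zg11] /andP[zv10 zv11].
  move: ual2 uav2 uzl2 uzg2 uzv2 => /andP[al20 al21] /andP[av20 av21] /andP[zl20 zl21] /andP[zg20 zg21] /andP[zv20 zv21].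
  pose Xl := t * (al1 * a1) + (1 - t) * (al2 * a2).
  pose Xv := t * (av1 * a1) + (1 - t) * (av2 * a2).
  pose Yl := t * (zl1 * b1) + (1 - t) * (zl2 * b2).
  pose Yg := t * (zg1 * b1) + (1 - t) * (zg2 * b2).
  pose Yv := t * (zv1 * b1) + (1 - t) * (zv2 * b2).
  have Xl0 : 0 <= Xl by rewrite /Xl; pos.
  have Xv0 : 0 <= Xv by rewrite /Xv; pos.
  have Yl0 : 0 <= Yl by rewrite /Yl; pos.
  have Yg0 : 0 <= Yg by rewrite /Yg; pos.
  have Yv0 : 0 <= Yv by rewrite /Yv; pos.
  have hX : Xl + Xv = cmb t a1 a2.
    rewrite /Xl /Xv /cmb.
    have -> : av1 = 1 - al1 by lra.
    have -> : av2 = 1 - al2 by lra.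
    ring.
  have hY : Yl + Yg + Yv = cmb t b1 b2.
    rewrite /Yl /Yg /Yv /cmb.
    have -> : zv1 = 1 - zl1 - zg1 by lra.
    have -> : zv2 = 1 - zl2 - zg2 by lra.
    ring.
  apply: le_ereal_sup_tmp.
  exists (sigma Sl Sg Sv (cmb t a1 a2) (cmb t b1 b2) (cmb t pl1 pl2) (cmb t d1 d2)
     (cmb t pv1 pv2) (Xl / cmb t a1 a2) (Xv / cmb t a1 a2) (Xv / cmb t a1 a2)
     (Yl / cmb t b1 b2) (Yg / cmb t b1 b2) (Yv / cmb t b1 b2)).
  + exists (cmb t pl1 pl2), (cmb t pv1 pv2), (Xl / cmb t a1 a2), (Xv / cmb t a1 a2), (Xv / cmb t a1 a2),
      (Yl / cmb t b1 b2), (Yg / cmb t b1 b2), (Yv / cmb t b1 b2).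
    split; [|split; [|split; [|split; [|by []]]]].
    * split => //.
      rewrite /cmb.
      have -> : pv1 = 1 - d1 - pl1 by lra.
      have -> : pv2 = 1 - d2 - pl2 by lra.
      ring.
    * have [h1 h2] := @frac2 _ _ _ _ Xl0 Xv0 hX tau0; by split.
    * have [h1 h2 h3] := @frac3 _ _ _ _ _ Yl0 Yg0 Yv0 hY e0; by split.
    * split => //.
      -- by rewrite -mulrDl hX divff.
      -- by rewrite -!mulrDl hY divff.
  + rewrite /sigma; apply: sum3_comb => //.
    * by apply: term_concave => //; tc.
    * by apply: term_concave => //; tc.
    * by apply: term_concave => //; tc.
Qed.
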